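(* Let $\mathbb{F}\subseteq\mathbb{C}$ be a subfield closed under complex conjugation, $m\ge2$, $N\ge1$. Let $\mathrm{v}=(v_1,\dots,v_m)\in\mathbb{F}^m$ have unit norm and let $V\in\mathbb{F}^{m\times m}$ be a unitary matrix whose first row is $\mathrm{v}$. Let $\mathbf{A}_1(z)=(a_{11}(z),\dots,a_{1m}(z))$ be a row of polynomials $a_{1j}(z)=\sum_{k=0}^N\alpha_{kj}z^k$, $\alpha_{kj}\in\mathbb{F}$, with $\sum_{j=1}^m|\alpha_{Nj}|>0$, such that $\mathbf{A}_1(z)\widetilde{\mathbf{A}_1}(z)=1$ for $z\in\mathbb{C}\setminus\{0\}$ and $\mathbf{A}_1(1)=\mathrm{v}$. Then there exists a unique $\mathbf{A}(z)\in\mathcal{WM}(m,N,N,\mathbb{F})$ with $\mathbf{A}(1)=V$ whose first row is $\mathbf{A}_1(z)$.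
   Context: For a Laurent polynomial $p(z)=\sum_kc_kz^k$, $\widetilde{p}(z)=\sum_k\overline{c_k}z^{-k}$; for a matrix of Laurent polynomials $P(z)=(p_{ij})$, $\widetilde{P}(z)=(\widetilde{p_{ij}})^T$. $\mathcal{WM}(m,N,N,\mathbb{F})$ is the set of matrix polynomials $\mathbf{A}(z)=\sum_{k=0}^NA_kz^k$ with $A_k\in\mathbb{F}^{m\times m}$, $A_N\ne0$, satisfying $\mathbf{A}(z)\widetilde{\mathbf{A}}(z)=I_m$ for $z\ne0$ (where $\widetilde{\mathbf{A}}(z)=\sum_kA_k^*z^{-k}$) and $\det\mathbf{A}(z)=c\,z^N$ for some constant $c$. *)

(* Defs.v *)
From mathcomp Require Import all_boot all_algebra.
From mathcomp Require Import complex reals.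
Set Implicit Arguments. Unset Strict Implicit. Unset Printing Implicit Defensive.
Import GRing.Theory Num.Theory.
Local Open Scope ring_scope.

Section Defs.
Variable C : numClosedFieldType.

Definition tilde_eval (p : {poly C}) (z : C) : C :=
  (map_poly (fun c : C => c^*) p).[z^-1].

Definition evalmx m n (A : 'M[{poly C}]_(m, n)) (z : C) : 'M[C]_(m, n) :=
  \matrix_(i, j) (A i j).[z].

Definition tildemx m n (A : 'M[{poly C}]_(m, n)) (z : C) : 'M[C]_(n, m) :=
  \matrix_(i, j) tilde_eval (A j i) z.

Definition WM (m N : nat) (F : {pred C}) (A : 'M[{poly C}]_m) : Prop :=
  [/\ (forall i j k, (A i j)`_k \in F),
      (forall i j, (size (A i j) <= N.+1)%N),
      (exists i j, (A i j)`_N != 0),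
      (forall z : C, z != 0 -> evalmx A z *m tildemx A z = 1%:M)
    & (exists c : C, \det A = c *: 'X^N)].

Definition ord_first (m : nat) (hm : (0 < m)%N) : 'I_m := Ordinal hm.
End Defs.

(* Main.v *)
Require Import Defs.
From mathcomp Require Import all_boot all_algebra.
From mathcomp Require Import complex reals.
Import GRing.Theory Num.Theory.
Set Implicit Arguments. Unset Strict Implicit. Unset Printing Implicit Defensive.
Local Open Scope ring_scope.

Lemma det_rank1 (R : comNzRingType) n (c : 'cV[R]_n) (r : 'rV[R]_n) :
  \det (1%:M + c *m r) = 1 + (r *m c) 0 0.
Proof.
have e1 : block_mx (1%:M : 'M[R]_1) r (- c) 1%:M =
   block_mx 1%:M 0 (- c) 1%:M *m block_mx 1%:M r 0 (1%:M + c *m r).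
  rewrite mulmx_block ?mul1mx ?mul0mx ?mulmx0 ?addr0 ?add0r ?mulmx1 ?mulNmx.
  by rewrite addrCA addNr addr0.
have e2 : block_mx (1%:M : 'M[R]_1) r (- c) 1%:M =
   block_mx (1%:M + r *m c) r 0 1%:M *m block_mx 1%:M 0 (- c) 1%:M.
  rewrite mulmx_block ?mul1mx ?mul0mx ?mulmx0 ?addr0 ?add0r ?mulmx1 ?mulmxN.
  by rewrite addrK.
have := congr1 determinant (etrans (esym e2) e1); rewrite !det_mulmx !det_lblock !det_ublock !det1 !mul1r !mulr1.
by rewrite det_mx11 !mxE => ->. Qed.

Section S.
Variable C : numClosedFieldType.

Definition hmx m n (M : 'M[C]_(m, n)) : 'M[C]_(n, m) :=
  (map_mx (fun x : C => x^*) M)^T.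
Definition cmx m n (A : 'M[{poly C}]_(m, n)) k : 'M[C]_(m, n) :=
  \matrix_(i, j) (A i j)`_k.
Definition pc m n (M : 'M[C]_(m, n)) : 'M[{poly C}]_(m, n) := map_mx polyC M.

Lemma hmxM m n p (A : 'M[C]_(m, n)) (B : 'M[C]_(n, p)) :
  hmx (A *m B) = hmx B *m hmx A.
Proof. by rewrite /hmx map_mxM trmx_mul. Qed.
Lemma hmxK m n (A : 'M[C]_(m, n)) : hmx (hmx A) = A.
Proof. by apply/matrixP=> i j; rewrite !mxE conjCK. Qed.
Lemma hmxD m n (A B : 'M[C]_(m, n)) : hmx (A + B) = hmx A + hmx B.
Proof. by apply/matrixP=> i j; rewrite !mxE rmorphD. Qed.
Lemma hmxN m n (A : 'M[C]_(m, n)) : hmx (- A) = - hmx A.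
Proof. by apply/matrixP=> i j; rewrite !mxE rmorphN. Qed.
Lemma hmxZ m n x (A : 'M[C]_(m, n)) : hmx (x *: A) = x^* *: hmx A.
Proof. by apply/matrixP=> i j; rewrite !mxE rmorphM. Qed.
Lemma hmx1 n : hmx (1%:M : 'M[C]_n) = 1%:M.
Proof. by rewrite /hmx map_mx1 trmx1. Qed.
Lemma hmx0 m n : hmx (0 : 'M[C]_(m, n)) = 0.
Proof. by apply/matrixP=> i j; rewrite !mxE conjC0. Qed.

Lemma evalmxE m n (A : 'M[{poly C}]_(m, n)) z : evalmx A z = map_mx (horner_eval z) A.
Proof. by apply/matrixP=> i j; rewrite !mxE. Qed.
Lemma evalmxM m n p (A : 'M[{poly C}]_(m, n)) (B : 'M_(n, p)) z :
  evalmx (A *m B) z = evalmx A z *m evalmx B z.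
Proof. by rewrite !evalmxE map_mxM. Qed.
Lemma evalmxD m n (A B : 'M[{poly C}]_(m, n)) z :
  evalmx (A + B) z = evalmx A z + evalmx B z.
Proof. by apply/matrixP=> i j; rewrite !mxE hornerD. Qed.
Lemma evalmx_pc m n (M : 'M[C]_(m, n)) z : evalmx (pc M) z = M.
Proof. by apply/matrixP=> i j; rewrite !mxE hornerC. Qed.
Lemma evalmxXZ m n (A : 'M[{poly C}]_(m, n)) z : evalmx ('X *: A) z = z *: evalmx A z.
Proof. by apply/matrixP=> i j; rewrite !mxE hornerM hornerX. Qed.
Lemma evalmx0 m n (A : 'M[{poly C}]_(m, n)) : evalmx A 0 = cmx A 0.
Proof. by apply/matrixP=> i j; rewrite !mxE horner_coef0. Qed.
Lemma evalmx_row m n (A : 'M[{poly C}]_(m, n)) i z : evalmx (row i A) z = row i (evalmx A z).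
Proof. by apply/matrixP=> k j; rewrite !mxE. Qed.

Lemma tilde_evalE (p : {poly C}) z : tilde_eval p z = (p.[(z^-1)^*])^*.
Proof.
by rewrite /tilde_eval -horner_map /= conjCK.
Qed.

Lemma tildemxE m n (A : 'M[{poly C}]_(m, n)) z :
  tildemx A z = hmx (evalmx A (z^-1)^*).
Proof. by apply/matrixP=> i j; rewrite !mxE tilde_evalE. Qed.

Lemma tildemxM m n p (A : 'M[{poly C}]_(m, n)) (B : 'M_(n, p)) z :
  tildemx (A *m B) z = tildemx B z *m tildemx A z.
Proof. by rewrite !tildemxE evalmxM hmxM. Qed.

Definition PU m n (A : 'M[{poly C}]_(m, n)) :=
  forall z : C, z != 0 -> evalmx A z *m tildemx A z = 1%:M.


Definition sw m (w : 'rV[C]_m) : C := (w *m hmx w) 0 0.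
Definition proj m (w : 'rV[C]_m) : 'M[C]_m := (sw w)^-1 *: (hmx w *m w).

Lemma swE m (w : 'rV[C]_m) : sw w = \sum_j w 0 j * (w 0 j)^*.
Proof. by rewrite /sw mxE; apply: eq_bigr => j _; rewrite !mxE. Qed.

Lemma sw_ge0 m (w : 'rV[C]_m) : 0 <= sw w.
Proof. by rewrite swE; apply: sumr_ge0 => j _; apply: mul_conjC_ge0. Qed.

Lemma sw_neq0 m (w : 'rV[C]_m) : w != 0 -> sw w != 0.
Proof.
move=> wn0; apply/eqP => s0; move/eqP: wn0; apply; apply/matrixP=> i j.
rewrite (ord1 i) mxE; move: s0; rewrite swE => s0.
have := psumr_eq0P (P := predT) (fun j _ => mul_conjC_ge0 (w 0 j)) s0 (i := j) isT.
by move/eqP; rewrite mul_conjC_eq0 => /eqP.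
Qed.

Lemma sw_conj m (w : 'rV[C]_m) : (sw w)^* = sw w.
Proof. by apply: conj_Creal; apply: ger0_real; apply: sw_ge0. Qed.

Lemma w_hw m (w : 'rV[C]_m) : w *m hmx w = (sw w)%:M.
Proof. by apply/matrixP=> i j; rewrite (ord1 i) (ord1 j) [RHS]mxE /=. Qed.

Section Proj.
Variables (m : nat) (w : 'rV[C]_m).
Hypothesis wn0 : w != 0.
Local Notation P := (proj w).

Lemma projP : P *m P = P.
Proof.
have h : hmx w *m w *m (hmx w *m w) = sw w *: (hmx w *m w).
  by rewrite mulmxA -(mulmxA (hmx w)) w_hw mul_mx_scalar scalemxAl.
rewrite /proj -scalemxAl -scalemxAr h !scalerA -mulrA mulVr ?mulr1 //.
by rewrite unitfE sw_neq0.
Qed.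

Lemma projH : hmx P = P.
Proof. rewrite /proj hmxZ hmxM hmxK fmorphV; congr (_^-1 *: _); exact: sw_conj. Qed.

Lemma w_proj : w *m P = w.
Proof.
rewrite /proj -scalemxAr mulmxA w_hw mul_scalar_mx scalerA mulVr ?scale1r //.
by rewrite unitfE sw_neq0.
Qed.

Lemma proj_orth k (u : 'M[C]_(k, m)) : u *m hmx w = 0 -> u *m P = 0.
Proof. by move=> h; rewrite /proj -scalemxAr mulmxA h mul0mx scaler0. Qed.

Lemma proj_mult k (u : 'M[C]_(k, m)) (c : 'cV[C]_k) : u = c *m w -> u *m (1%:M - P) = 0.
Proof. by move=> ->; rewrite mulmxBr mulmx1 -mulmxA w_proj subrr. Qed.

Lemma proj_hw : (1%:M - P) *m hmx w = 0.
Proof.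
have := congr1 (fun M => hmx M) w_proj; rewrite hmxM projH => h.
by rewrite mulmxBl mul1mx h subrr.
Qed.

Definition G (x : C) : 'M[C]_m := (1%:M - P) + x *: P.

Lemma GG x y : G x *m G y = G (x * y).
Proof.
have PP := projP.
have h1 : (1%:M - P) *m (1%:M - P) = 1%:M - P.
  by rewrite mulmxBl mul1mx mulmxBr mulmx1 PP subrr subr0.
have h2 : (1%:M - P) *m P = 0 by rewrite mulmxBl mul1mx PP subrr.
have h3 : P *m (1%:M - P) = 0 by rewrite mulmxBr mulmx1 PP subrr.
rewrite /G; move: PP h1 h2 h3; move: (1%:M - P) => Q; move: (proj w) => P' PP h1 h2 h3.
rewrite mulmxDl !mulmxDr h1 -!scalemxAl -!scalemxAr h2 h3 PP !scaler0.
by rewrite scalerA mulrC !addr0 add0r.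
Qed.

Lemma G1 : G 1 = 1%:M.
Proof. by rewrite /G scale1r subrK. Qed.

Lemma hmxG x : hmx (G x) = G x^*.
Proof. by rewrite /G hmxD hmxZ hmxD hmxN hmx1 projH. Qed.

Definition E : 'M[{poly C}]_m := pc (1%:M - P) + 'X *: pc P.

Lemma evalE z : evalmx E z = G z.
Proof. by rewrite /E evalmxD evalmxXZ !evalmx_pc. Qed.

End Proj.


Lemma cmxD m n (A B : 'M[{poly C}]_(m, n)) k : cmx (A + B) k = cmx A k + cmx B k.
Proof. by apply/matrixP=> i j; rewrite !mxE coefD. Qed.

Lemma cmx_pcr m n p (A : 'M[{poly C}]_(m, n)) (M : 'M[C]_(n, p)) k :
  cmx (A *m pc M) k = cmx A k *m M.
Proof.
apply/matrixP=> i j; rewrite !mxE coef_sum; apply: eq_bigr => l _.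
by rewrite !mxE coefMC.
Qed.

Lemma cmx_XZ m n (A : 'M[{poly C}]_(m, n)) k :
  cmx ('X *: A) k = if k is k'.+1 then cmx A k' else 0.
Proof.
by apply/matrixP=> i j; rewrite !mxE coefXM; case: k => [|k] //=; rewrite mxE.
Qed.

Lemma cmx_drop m n (A : 'M[{poly C}]_(m, n)) k :
  cmx (map_mx (drop_poly 1) A) k = cmx A k.+1.
Proof. by apply/matrixP=> i j; rewrite !mxE coef_drop_poly addn1. Qed.

Lemma cmx_row m n (A : 'M[{poly C}]_(m, n)) i k : cmx (row i A) k = row i (cmx A k).
Proof. by apply/matrixP=> l j; rewrite !mxE. Qed.

Lemma cmx_pc m n (M : 'M[C]_(m, n)) k : cmx (pc M) k = if k == 0%N then M else 0.
Proof. by apply/matrixP=> i j; rewrite !mxE coefC; case: (k == 0%N); rewrite ?mxE. Qed.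

Lemma cmx_inj m n (A B : 'M[{poly C}]_(m, n)) : (forall k, cmx A k = cmx B k) -> A = B.
Proof.
move=> h; apply/matrixP=> i j; apply/polyP=> k.
by have := congr1 (fun M : 'M[C]_(m, n) => M i j) (h k); rewrite !mxE.
Qed.

Definition szle m n (A : 'M[{poly C}]_(m, n)) d := forall i j, (size (A i j) <= d)%N.

Lemma szleP m n (A : 'M[{poly C}]_(m, n)) d :
  szle A d <-> (forall k, (d <= k)%N -> cmx A k = 0).
Proof.
split=> [h k dk | h i j].
  by apply/matrixP=> i j; rewrite !mxE; apply: (leq_sizeP _ _ (h i j)).
apply/leq_sizeP=> k dk; have := congr1 (fun M : 'M[C]_(m, n) => M i j) (h k dk).
by rewrite !mxE.
Qed.

Section Proj2.
Variables (m : nat) (w : 'rV[C]_m).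
Hypothesis wn0 : w != 0.
Local Notation P := (proj w).

Definition down p (A : 'M[{poly C}]_(p, m)) : 'M[{poly C}]_(p, m) :=
  A *m pc (1%:M - P) + map_mx (drop_poly 1) A *m pc P.
Definition up p (B : 'M[{poly C}]_(p, m)) : 'M[{poly C}]_(p, m) := B *m E w.

Lemma cmx_down p (A : 'M[{poly C}]_(p, m)) k :
  cmx (down A) k = cmx A k *m (1%:M - P) + cmx A k.+1 *m P.
Proof. by rewrite /down cmxD !cmx_pcr cmx_drop. Qed.

Lemma cmx_up p (B : 'M[{poly C}]_(p, m)) k :
  cmx (up B) k = cmx B k *m (1%:M - P) + (if k is k'.+1 then cmx B k' *m P else 0).
Proof.
rewrite /up /E (mulmxDr B) -scalemxAr cmxD cmx_pcr cmx_XZ.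
by case: k => [|k] //; rewrite cmx_pcr.
Qed.

Lemma up_down p (A : 'M[{poly C}]_(p, m)) : cmx A 0 *m P = 0 -> up (down A) = A.
Proof.
move=> h0; apply: cmx_inj => k; rewrite cmx_up !cmx_down.
have PP := projP wn0.
have h1 : (1%:M - P) *m (1%:M - P) = 1%:M - P.
  by rewrite mulmxBl mul1mx mulmxBr mulmx1 PP subrr subr0.
have h2 : (1%:M - P) *m P = 0 by rewrite mulmxBl mul1mx PP subrr.
have h3 : P *m (1%:M - P) = 0 by rewrite mulmxBr mulmx1 PP subrr.
rewrite mulmxDl -!mulmxA h1 h3 mulmx0 addr0.
case: k => [|k]; first by rewrite mulmxBr mulmx1 h0 subr0 addr0.
by rewrite cmx_down mulmxDl -!mulmxA h2 PP mulmx0 add0r mulmxBr mulmx1 subrK.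
Qed.

Lemma row_down p (A : 'M[{poly C}]_(p, m)) i : row i (down A) = down (row i A).
Proof. by rewrite /down linearD /= !row_mul map_row. Qed.

Lemma row_up p (B : 'M[{poly C}]_(p, m)) i : row i (up B) = up (row i B).
Proof. by rewrite /up row_mul. Qed.

Lemma eval_up p (B : 'M[{poly C}]_(p, m)) z : evalmx (up B) z = evalmx B z *m G w z.
Proof. by rewrite /up evalmxM evalE. Qed.

Lemma eval_down p (A : 'M[{poly C}]_(p, m)) z : cmx A 0 *m P = 0 -> z != 0 ->
  evalmx (down A) z = evalmx A z *m G w z^-1.
Proof.
move=> h0 z0; rewrite -{2}(up_down h0) eval_up -mulmxA GG // mulfV // G1 //.
by rewrite mulmx1.
Qed.

Lemma conj_inv_conj (z : C) : (((z^-1)^*)^-1)^* = z.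
Proof. by rewrite -fmorphV invrK conjCK. Qed.

Lemma tilde_up p (B : 'M[{poly C}]_(p, m)) z :
  tildemx (up B) z = G w z^-1 *m tildemx B z.
Proof. by rewrite /up tildemxM tildemxE evalE hmxG // conjCK. Qed.

Lemma tilde_down p (A : 'M[{poly C}]_(p, m)) z : cmx A 0 *m P = 0 -> z != 0 ->
  tildemx (down A) z = G w z *m tildemx A z.
Proof.
move=> h0 z0; rewrite !tildemxE eval_down //; last first.
  by rewrite conjC_eq0 invr_eq0.
by rewrite hmxM hmxG // conj_inv_conj.
Qed.

Lemma PU_up p (B : 'M[{poly C}]_(p, m)) : PU B -> PU (up B).
Proof.
move=> h z z0; rewrite eval_up tilde_up -mulmxA (mulmxA (G w z)) GG //.
by rewrite mulfV // G1 // mul1mx h.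
Qed.

Lemma PU_down p (A : 'M[{poly C}]_(p, m)) : cmx A 0 *m P = 0 -> PU A -> PU (down A).
Proof.
move=> h0 h z z0; rewrite eval_down // tilde_down // -mulmxA (mulmxA (G w z^-1)).
by rewrite GG // mulVf // G1 // mul1mx h.
Qed.

Lemma eval1_up p (B : 'M[{poly C}]_(p, m)) : evalmx (up B) 1 = evalmx B 1.
Proof. by rewrite eval_up G1 // mulmx1. Qed.

Lemma eval1_down p (A : 'M[{poly C}]_(p, m)) : cmx A 0 *m P = 0 ->
  evalmx (down A) 1 = evalmx A 1.
Proof. by move=> h0; rewrite eval_down ?oner_eq0 // invr1 G1 // mulmx1. Qed.

End Proj2.


Lemma conjM (x y : C) : (x * y)^* = x^* * y^*. Proof. exact: rmorphM. Qed.
Lemma conjX (x : C) n : (x ^+ n)^* = x^* ^+ n. Proof. exact: rmorphXn. Qed.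
Lemma conj_sum n (f : 'I_n -> C) : (\sum_i f i)^* = \sum_i (f i)^*.
Proof. exact: rmorph_sum. Qed.

Definition sharp N (p : {poly C}) : {poly C} := \poly_(k < N.+1) (p`_(N - k))^*.
Definition sharpmx N m n (A : 'M[{poly C}]_(m, n)) : 'M[{poly C}]_(n, m) :=
  \matrix_(i, j) sharp N (A j i).

Lemma sharp_eval N (p : {poly C}) z : (size p <= N.+1)%N -> z != 0 ->
  (sharp N p).[z] = z ^+ N * (p.[(z^-1)^*])^*.
Proof.
move=> sp z0; rewrite horner_poly (horner_coef_wide _ sp) conj_sum mulr_sumr.
rewrite (reindex_inj rev_ord_inj) /=; apply: eq_bigr => i _.
rewrite conjM conjX conjCK subKn; last by rewrite -ltnS.
have iN : (i <= N)%N by rewrite -ltnS.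
rewrite mulrCA; congr (_ * _).
have e : z ^+ N = z ^+ (N - i) * z ^+ i by rewrite -exprD subnK.
by rewrite subSS e exprVn -mulrA mulfV ?mulr1 // expf_neq0.
Qed.

Lemma sharp0 N (p : {poly C}) : (sharp N p).[0] = (p`_N)^*.
Proof. by rewrite horner_coef0 coef_poly /= subn0. Qed.

Lemma poly_eq_nz (p : {poly C}) : (forall z, z != 0 -> p.[z] = 0) -> p = 0.
Proof.
move=> h; apply/eqP; apply: contraT => pn0.
pose rs := [seq (i.+1)%:R : C | i <- iota 0 (size p)].
have : (size rs < size p)%N.
  apply: max_poly_roots pn0 _ _.
    apply/allP=> x /mapP [i _ ->]; apply/rootP; apply: h.
    by rewrite pnatr_eq0.
  rewrite map_inj_uniq ?iota_uniq // => i j /eqP; rewrite eqr_nat eqSS.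
  by move/eqP.
by rewrite size_map size_iota ltnn.
Qed.

Lemma evalmx_inj_nz m n (A B : 'M[{poly C}]_(m, n)) :
  (forall z, z != 0 -> evalmx A z = evalmx B z) -> A = B.
Proof.
move=> h; apply/matrixP=> i j; apply/eqP; rewrite -subr_eq0; apply/eqP.
apply: poly_eq_nz => z z0; have := congr1 (fun M : 'M[C]_(m, n) => M i j) (h z z0).
by rewrite !mxE hornerD hornerN => ->; rewrite subrr.
Qed.

Lemma evalmxZ m n q (A : 'M[{poly C}]_(m, n)) z : evalmx (q *: A) z = q.[z] *: evalmx A z.
Proof. by apply/matrixP=> i j; rewrite !mxE hornerM. Qed.

Lemma evalmx1 n z : evalmx (1%:M : 'M[{poly C}]_n) z = 1%:M.
Proof. by rewrite evalmxE map_mx1. Qed.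

Lemma eval_sharpmx N m n (A : 'M[{poly C}]_(m, n)) z : szle A N.+1 -> z != 0 ->
  evalmx (sharpmx N A) z = z ^+ N *: tildemx A z.
Proof.
move=> sz z0; apply/matrixP=> i j; rewrite !mxE sharp_eval // tilde_evalE //.
Qed.

Lemma eval0_sharpmx N m n (A : 'M[{poly C}]_(m, n)) :
  evalmx (sharpmx N A) 0 = hmx (cmx A N).
Proof. by apply/matrixP=> i j; rewrite !mxE sharp0. Qed.

Lemma PU_poly N m n (A : 'M[{poly C}]_(m, n)) : PU A -> szle A N.+1 ->
  A *m sharpmx N A = 'X^N *: 1%:M.
Proof.
move=> pu sz; apply: evalmx_inj_nz => z z0.
rewrite evalmxM eval_sharpmx // -scalemxAr pu // evalmxZ evalmx1.
by rewrite hornerXn.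
Qed.

Lemma PU_coef0 N m n (A : 'M[{poly C}]_(m, n)) : PU A -> szle A N.+2 ->
  cmx A 0 *m hmx (cmx A N.+1) = 0.
Proof.
move=> pu sz; have := congr1 (fun M : 'M[{poly C}]_m => evalmx M 0) (PU_poly pu sz).
rewrite evalmxM evalmxZ evalmx0 eval0_sharpmx hornerXn expr0n /= scale0r.
by [].
Qed.

Lemma PU_adj N m (A : 'M[{poly C}]_m.+1) c : PU A -> szle A N.+1 ->
  \det A = c *: 'X^N -> c *: hmx (cmx A N) = \adj (cmx A 0).
Proof.
move=> pu sz dA; set S := sharpmx N A.
have h1 : \adj A *m (A *m S) = (\adj A *m A) *m S by rewrite mulmxA.
rewrite PU_poly // mul_adj_mx dA -scalemxAr mulmx1 mul_scalar_mx in h1.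
have h2 : \adj A = c%:P *: S.
  have h1' : 'X^N *: \adj A = 'X^N *: (c%:P *: S).
    by rewrite h1 scalerA -mul_polyC mulrC.
  have xn : 'X^N != 0 :> {poly C} by rewrite expf_neq0 // polyX_eq0.
  apply/matrixP=> i j; have := congr1 (fun M : 'M[{poly C}]_m.+1 => M i j) h1'.
  by rewrite [LHS]mxE [RHS]mxE => /(mulfI xn).
have := congr1 (fun M : 'M[{poly C}]_m.+1 => evalmx M 0) h2.
rewrite evalmxZ hornerC eval0_sharpmx evalmxE map_mx_adj -evalmxE evalmx0.
by move=> <-.
Qed.

Lemma rank_adj m (M : 'M[C]_m.+1) : \adj M != 0 -> (m <= \rank M)%N.
Proof.
apply: contraR; rewrite -ltnNge => rk; apply/eqP/matrixP=> i j.
rewrite !mxE /cofactor; apply/eqP; rewrite mulf_eq0; apply/orP; right.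
apply/eqP; apply: contraTeq rk => d0; rewrite -ltnNge ltnS.
have uf : row_free (row' j (col' i M)).
  by rewrite row_free_unit unitmxE unitfE.
have e : \rank (row' j (col' i M)) = m by move/eqP: uf.
apply: (@leq_trans (\rank (row' j (col' i M)))); first by rewrite e.
apply: (leq_trans (mxrankS (rowsub_sub (lift j) (col' i M)))).
rewrite -mxrank_tr tr_col' -[X in (_ <= X)%N]mxrank_tr.
exact: mxrankS (rowsub_sub (lift i) M^T).
Qed.


Lemma rank_hmx k l (M : 'M[C]_(k, l)) : \rank (hmx M) = \rank M.
Proof. by rewrite /hmx mxrank_tr mxrank_map. Qed.

Lemma ker1 k (A0 : 'M[C]_k) (r w : 'rV[C]_k) : w != 0 -> (k <= (\rank A0).+1)%N ->
  r *m hmx A0 = 0 -> w *m hmx A0 = 0 -> exists a, r = a *: w.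
Proof.
move=> wn0 rk hr hw.
have rK : (r <= kermx (hmx A0))%MS by apply/sub_kermxP.
have wK : (w <= kermx (hmx A0))%MS by apply/sub_kermxP.
have rkK : (\rank (kermx (hmx A0)) <= 1)%N.
  by rewrite mxrank_ker rank_hmx leq_subLR addn1.
have rkw : \rank w = 1%N.
  apply/eqP; rewrite eqn_leq rank_leq_row lt0n mxrank_eq0 wn0 //.
have := mxrank_leqif_eq wK; case=> _ /esym.
rewrite rkw eqn_leq rkK /=.
have -> : (1 <= \rank (kermx (hmx A0)))%N by rewrite -rkw mxrankS.
move=> /andP [_ Kw]; apply/sub_rVP; exact: submx_trans rK Kw.
Qed.

Lemma hmx_row k l (M : 'M[C]_(k, l)) i : hmx (row i M) = col i (hmx M).
Proof. by apply/matrixP=> a b; rewrite !mxE. Qed.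

Lemma RK N m (A : 'M[{poly C}]_m.+1) (c : C) (i0 : 'I_m.+1) : PU A -> szle A N.+2 ->
  \det A = c *: 'X^(N.+1) -> c != 0 -> row i0 (cmx A N.+1) != 0 ->
  cmx A N.+1 *m (1%:M - proj (row i0 (cmx A N.+1))) = 0 /\
  cmx A 0 *m proj (row i0 (cmx A N.+1)) = 0.
Proof.
move=> pu sz dA c0 wn0; set w := row i0 (cmx A N.+1).
have h0 := PU_coef0 pu sz.
have h1 : cmx A N.+1 *m hmx (cmx A 0) = 0.
  by rewrite -(hmxK (cmx A N.+1)) -hmxM h0 hmx0.
have hw' : w *m hmx (cmx A 0) = 0 by rewrite /w -row_mul h1 linear0.
have hw : cmx A 0 *m hmx w = 0.
  by rewrite -(hmxK (cmx A 0)) -hmxM hw' hmx0.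
split; last exact: proj_orth.
have hadj := PU_adj pu sz dA.
have adjn0 : \adj (cmx A 0) != 0.
  rewrite -hadj; apply: contra wn0 => /eqP h.
  have : hmx (cmx A N.+1) = 0.
    by apply/eqP; move/eqP: h; rewrite scaler_eq0 (negPf c0).
  by move=> h'; rewrite /w -(hmxK (cmx A N.+1)) h' hmx0 linear0.
have rk := rank_adj adjn0.
apply/row_matrixP=> i; rewrite row_mul linear0.
have hr : row i (cmx A N.+1) *m hmx (cmx A 0) = 0 by rewrite -row_mul h1 linear0.
have [a ->] := ker1 wn0 (rk : (m.+1 <= (\rank (cmx A 0)).+1)%N) hr hw'.
by rewrite -scalemxAl mulmxBr mulmx1 w_proj // subrr scaler0.
Qed.


Lemma pcB m n (M1 M2 : 'M[C]_(m, n)) : pc (M1 - M2) = pc M1 - pc M2.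
Proof. by apply/matrixP=> i j; rewrite !mxE polyCB. Qed.
Lemma pcM m n p (M1 : 'M[C]_(m, n)) (M2 : 'M[C]_(n, p)) : pc (M1 *m M2) = pc M1 *m pc M2.
Proof. by rewrite /pc map_mxM. Qed.
Lemma pc1 n : pc (1%:M : 'M[C]_n) = 1%:M.
Proof. by rewrite /pc map_mx1. Qed.

Lemma detE m (w : 'rV[C]_m) : w != 0 -> \det (E w) = 'X.
Proof.
move=> wn0.
have eP : proj w = ((sw w)^-1 *: hmx w) *m w by rewrite /proj scalemxAl.
have -> : E w = 1%:M + ((('X - 1) *: pc ((sw w)^-1 *: hmx w)) *m pc w).
  rewrite /E pcB pc1 -scalemxAl -pcM -eP scalerBl scale1r.
  by rewrite addrA addrAC.
rewrite det_rank1 -scalemxAr -pcM -scalemxAr w_hw.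
rewrite !mxE /= mulr1n mulVf ?sw_neq0 // polyC1 mulr1.
by rewrite addrC subrK.
Qed.

Section FSec.
Variable F : {pred C}.
Hypothesis Fs : GRing.divring_closed F.
Hypothesis Fc : {in F, forall x : C, x^* \in F}.

Lemma F1 : 1 \in F. Proof. by case: Fs. Qed.
Lemma FB x y : x \in F -> y \in F -> x - y \in F.
Proof. by case: Fs => _ h _; apply: h. Qed.
Lemma F0 : 0 \in F. Proof. by rewrite -(subrr 1) FB ?F1. Qed.
Lemma FN x : x \in F -> - x \in F. Proof. by move=> h; rewrite -sub0r FB ?F0. Qed.
Lemma FD x y : x \in F -> y \in F -> x + y \in F.
Proof. by move=> hx hy; rewrite -[y]opprK FB ?FN. Qed.
Lemma Fdiv x y : x \in F -> y \in F -> x / y \in F.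
Proof. by case: Fs => _ _ h; apply: h. Qed.
Lemma FV x : x \in F -> x^-1 \in F.
Proof. by move=> h; rewrite -[x^-1]mul1r Fdiv ?F1. Qed.
Lemma FM x y : x \in F -> y \in F -> x * y \in F.
Proof. by move=> hx hy; rewrite -[y]invrK Fdiv ?FV. Qed.
Lemma Fsum (I : finType) (f : I -> C) : (forall i, f i \in F) -> \sum_i f i \in F.
Proof. by move=> h; elim/big_ind: _ => //; [exact: F0 | exact: FD]. Qed.

Definition inFm m n (M : 'M[C]_(m, n)) := forall i j, M i j \in F.

Lemma inFmD m n (M1 M2 : 'M[C]_(m, n)) : inFm M1 -> inFm M2 -> inFm (M1 + M2).
Proof. by move=> h1 h2 i j; rewrite mxE FD. Qed.
Lemma inFmB m n (M1 M2 : 'M[C]_(m, n)) : inFm M1 -> inFm M2 -> inFm (M1 - M2).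
Proof. by move=> h1 h2 i j; rewrite !mxE FB. Qed.
Lemma inFmM m n p (M1 : 'M[C]_(m, n)) (M2 : 'M[C]_(n, p)) :
  inFm M1 -> inFm M2 -> inFm (M1 *m M2).
Proof. by move=> h1 h2 i j; rewrite mxE Fsum // => k; rewrite FM. Qed.
Lemma inFm1 n : inFm (1%:M : 'M[C]_n).
Proof. by move=> i j; rewrite mxE; case: (i == j); rewrite ?F1 ?F0. Qed.
Lemma inFm0 m n : inFm (0 : 'M[C]_(m, n)).
Proof. by move=> i j; rewrite mxE F0. Qed.
Lemma inFmZ m n x (M : 'M[C]_(m, n)) : x \in F -> inFm M -> inFm (x *: M).
Proof. by move=> hx h i j; rewrite mxE FM. Qed.
Lemma inFm_hmx m n (M : 'M[C]_(m, n)) : inFm M -> inFm (hmx M).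
Proof. by move=> h i j; rewrite !mxE Fc. Qed.
Lemma inFm_row m n (M : 'M[C]_(m, n)) i : inFm M -> inFm (row i M).
Proof. by move=> h a b; rewrite mxE. Qed.
Lemma inFm_proj m (w : 'rV[C]_m) : inFm w -> inFm (proj w).
Proof.
move=> h; apply: inFmZ; last by apply: inFmM => //; apply: inFm_hmx.
by apply: FV; rewrite /sw; apply: (inFmM h (inFm_hmx h)).
Qed.

Definition coefF m n (A : 'M[{poly C}]_(m, n)) := forall k, inFm (cmx A k).

Lemma coefFE m n (A : 'M[{poly C}]_(m, n)) : coefF A <-> (forall i j k, (A i j)`_k \in F).
Proof.
split=> h; first by move=> i j k; have := h k i j; rewrite mxE.
by move=> k i j; rewrite mxE.
Qed.

End FSec.

Lemma cmx_neq0P m n (A : 'M[{poly C}]_(m, n)) N :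
  cmx A N != 0 <-> exists i j, (A i j)`_N != 0.
Proof.
split.
  move=> h; case: (pickP (fun ij : 'I_m * 'I_n => (A ij.1 ij.2)`_N != 0)).
    by case=> i j /= hij; exists i, j.
  move=> hn; case/eqP: h; apply/matrixP=> i j; rewrite !mxE.
  by have := hn (i, j); rewrite /= => /negbFE/eqP.
case=> i [j h]; apply: contra h => /eqP h.
by have := congr1 (fun M : 'M[C]_(m, n) => M i j) h; rewrite !mxE => ->.
Qed.

Lemma sz1 m n (A : 'M[{poly C}]_(m, n)) : szle A 1 -> A = pc (cmx A 0).
Proof. by move=> h; apply/matrixP=> i j; rewrite !mxE; apply: size1_polyC. Qed.

Lemma cmx_up_row m (w : 'rV[C]_m) p (B : 'M[{poly C}]_(p, m)) i k :
  row i (cmx (up w B) k) = cmx (up w (row i B)) k.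
Proof. by rewrite -cmx_row row_up. Qed.

Section Main.
Variable F : {pred C}.
Hypothesis Fs : GRing.divring_closed F.
Hypothesis Fc : {in F, forall x : C, x^* \in F}.
Variables (m : nat) (V : 'M[C]_m.+1) (i0 : 'I_m.+1).
Hypothesis VF : inFm F V.
Hypothesis VU : V *m hmx V = 1%:M.

Lemma WMP N (A : 'M[{poly C}]_m.+1) : WM N F A <->
  [/\ coefF F A, szle A N.+1, cmx A N != 0, PU A & exists c, \det A = c *: 'X^N].
Proof.
split.
  case=> h1 h2 h3 h4 h5; split=> //; first by apply/coefFE.
  by apply/cmx_neq0P.
case=> h1 h2 h3 h4 h5; split=> //; first by apply/coefFE.
by apply/cmx_neq0P.
Qed.

Definition good N (a : 'rV[{poly C}]_m.+1) :=
  [/\ coefF F a, szle a N.+1, cmx a N != 0, PU a & evalmx a 1 = row i0 V].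

Definition Good N (a : 'rV[{poly C}]_m.+1) (A : 'M[{poly C}]_m.+1) :=
  [/\ WM N F A, evalmx A 1 = V & row i0 A = a].

Lemma detV_neq0 : \det V != 0.
Proof.
apply/eqP => d0; have := congr1 determinant VU.
by rewrite det_mulmx d0 mul0r det1 => /eqP; rewrite eq_sym oner_eq0.
Qed.

Lemma V_neq0 : V != 0.
Proof. by apply: contraNneq detV_neq0 => ->; rewrite det0. Qed.

Lemma base a : good 0 a -> exists! A, Good 0 a A.
Proof.
case=> aF asz an0 apu a1.
have ea : a = pc (row i0 V).
  by rewrite (sz1 asz) -a1 {2}(sz1 asz) evalmx_pc.
exists (pc V); split.
  split; last by rewrite ea /pc map_row.
    apply/WMP; split.
    - by move=> k; rewrite cmx_pc; case: (k == 0)%N; [exact: VF | exact: (inFm0 Fs)].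
    - by move=> i j; rewrite mxE size_polyC leq_b1.
    - by rewrite cmx_pc eqxx V_neq0.
    - by move=> z z0; rewrite tildemxE !evalmx_pc.
    - by exists (\det V); rewrite /pc det_map_mx expr0 alg_polyC.
  by rewrite evalmx_pc.
move=> A' [/WMP [_ sz _ _ _] A1 _].
have e := sz1 sz; rewrite -A1 {1}e evalmx_pc; exact/esym.
Qed.

Lemma step N : (forall b, good N b -> exists! B, Good N b B) ->
  forall a, good N.+1 a -> exists! A, Good N.+1 a A.
Proof.
move=> IH a [aF asz an0 apu a1].
set w := cmx a N.+1.
have wF : inFm F w by apply: aF.
have PF : inFm F (proj w) by apply: (inFm_proj Fs Fc).
have QF : inFm F (1%:M - proj w) by apply: (inFmB Fs) => //; apply: (inFm1 Fs).
have a0P : cmx a 0 *m proj w = 0.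
  by apply: proj_orth; apply: (PU_coef0 apu asz).
have wP : w *m (1%:M - proj w) = 0 by rewrite mulmxBr mulmx1 w_proj // subrr.
set b := down w a.
have bN : cmx b N = cmx a N *m (1%:M - proj w) + w.
  by rewrite /b cmx_down w_proj.
have gb : good N b.
  split.
  - move=> k; rewrite /b cmx_down; apply: (inFmD Fs); apply: (inFmM Fs) => //;
    exact: aF.
  - apply/szleP => k Nk; rewrite /b cmx_down.
    move/szleP: asz => asz.
    case: (ltngtP k N.+1) => [|kN|->]; first by rewrite ltnNge Nk.
      by rewrite !asz ?mul0mx ?addr0 // ltnW.
    by rewrite wP (asz N.+2) // mul0mx addr0.
  - rewrite bN; apply/eqP => h.
    have := congr1 (fun M => M *m hmx w) h.
    rewrite mulmxDl -mulmxA proj_hw // mulmx0 add0r mul0mx w_hw => /matrixP/(_ 0 0).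
    by rewrite !mxE /= mulr1n => /eqP; rewrite (negPf (sw_neq0 an0)).
  - exact: PU_down.
  - by rewrite eval1_down.
have [B [[WB B1 rB] uB]] := IH b gb.
have [BF Bsz BN Bpu [cB dB]] := (WMP N B).1 WB.
exists (up w B); split.
  split; last by rewrite row_up rB up_down.
    apply/WMP; split.
    - move=> k; rewrite cmx_up; apply: (inFmD Fs).
        by apply: (inFmM Fs) => //; exact: BF.
      by case: k => [|k]; [exact: (inFm0 Fs) | apply: (inFmM Fs) => //; exact: BF].
    - apply/szleP => k Nk; rewrite cmx_up; move/szleP: Bsz => Bsz.
      rewrite Bsz ?mul0mx ?add0r; last by rewrite ltnW.
      by case: k Nk => [|k] // Nk; rewrite Bsz ?mul0mx.
    - move: (an0); apply: contra => /eqP h.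
      have e : row i0 (cmx (up w B) N.+1) = cmx a N.+1.
        by rewrite cmx_up_row rB up_down.
      by rewrite -e h linear0.
    - exact: PU_up.
    - by exists cB; rewrite /up det_mulmx dB detE // -scalerAl -exprSr.
  by rewrite eval1_up.
move=> A' [WA' A'1 rA'].
have [A'F A'sz A'N A'pu [c dA']] := (WMP N.+1 A').1 WA'.
have c0 : c != 0.
  have : (\det A').[1] = \det V.
    by rewrite -A'1 evalmxE det_map_mx.
  rewrite dA' hornerZ hornerXn expr1n mulr1 => ->; exact: detV_neq0.
have ew : row i0 (cmx A' N.+1) = w by rewrite -cmx_row rA'.
have wn0' : row i0 (cmx A' N.+1) != 0 by rewrite ew.
have [hN1 h0] := RK A'pu A'sz dA' c0 wn0'.
rewrite ew in hN1 h0.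
have [_ _ bn0 _ _] := gb.
set B' := down w A'.
have eA' : up w B' = A' by rewrite /B' up_down.
have GB' : Good N b B'.
  split; last by rewrite /B' row_down rA'.
    apply/WMP; split.
    - move=> k; rewrite /B' cmx_down; apply: (inFmD Fs); apply: (inFmM Fs) => //;
      exact: A'F.
    - apply/szleP => k Nk; rewrite /B' cmx_down.
      move/szleP: A'sz => A'sz.
      case: (ltngtP k N.+1) => [|kN|->]; first by rewrite ltnNge Nk.
        by rewrite !A'sz ?mul0mx ?addr0 // ltnW.
      by rewrite hN1 (A'sz N.+2) // mul0mx addr0.
    - have e : row i0 (cmx B' N) = cmx b N by rewrite -cmx_row /B' row_down rA'.
      by move: bn0; rewrite -e; apply: contra => /eqP ->; rewrite linear0.
    - exact: PU_down.
    - exists c; apply: (@mulIf _ 'X); first by rewrite polyX_eq0.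
      by rewrite -scalerAl -exprSr -dA' -eA' /up det_mulmx detE.
  by rewrite /B' eval1_down.
have eB := uB B' GB'.
by rewrite -eA' -eB.
Qed.

Lemma main N a : good N a -> exists! A, Good N a A.
Proof. elim: N a => [|N IH] a; [exact: base | exact: step]. Qed.

End Main.
End S.

Unset Implicit Arguments. Set Strict Implicit. Set Printing Implicit Defensive.


Theorem theorem3 (R : realType) (F : {pred R[i]})
  (F_subfield : GRing.divring_closed F)
  (F_conj : {in F, forall x : R[i], x^* \in F})
  (m N : nat) (hm : (2 <= m)%N) (hN : (1 <= N)%N)
  (v : 'rV[R[i]]_m) (V : 'M[R[i]]_m) (a : 'rV[{poly R[i]}]_m) :
  (forall j, v ord0 j \in F) ->
  \sum_j `|v ord0 j| ^+ 2 = 1 ->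
  (forall i j, V i j \in F) ->
  V *m (map_mx (fun x : R[i] => x^*) V)^T = 1%:M ->
  row (ord_first (ltnW hm)) V = v ->
  (forall j k, (a ord0 j)`_k \in F) ->
  (forall j, (size (a ord0 j) <= N.+1)%N) ->
  0 < \sum_j `|(a ord0 j)`_N| ->
  (forall z : R[i], z != 0 -> \sum_j (a ord0 j).[z] * tilde_eval (a ord0 j) z = 1) ->
  (forall j, (a ord0 j).[1] = v ord0 j) ->
  exists! A : 'M[{poly R[i]}]_m,
    [/\ WM N F A, evalmx A 1 = V & row (ord_first (ltnW hm)) A = a].
Proof.
case: m hm v V a => [|m] hm v V a //.
move=> vF vn VF VU Vrow aF asz apos apu a1.
set i0 := ord_first (ltnW hm).
apply: (main F_subfield F_conj (i0 := i0) VF VU).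
split.
- apply/coefFE => i j k; rewrite (ord1 i); exact: aF.
- by move=> i j; rewrite (ord1 i); exact: asz.
- apply/eqP => h; move: apos.
  have -> : \sum_j `|(a ord0 j)`_N| = 0.
    apply: big1 => j _.
    by have := congr1 (fun M : 'M[R[i]]_(1, m.+1) => M ord0 j) h; rewrite !mxE => ->; rewrite normr0.
  by move/lt0r_neq0/eqP.
- move=> z z0; apply/matrixP=> i j; rewrite (ord1 i) (ord1 j) !mxE /= -(apu z z0).
  by apply: eq_bigr => k _; rewrite !mxE.
- by apply/matrixP=> i j; rewrite (ord1 i) Vrow !mxE a1.
Qed.
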